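(* Let $p$ be a prime and $G$ a finite $p$-group of maximal class which has an abelian maximal subgroup. Then every non-abelian subgroup $H$ of $G$ satisfies $C_G(H)\le H$.
   Context: A group of order $p^n$ ($n\ge 2$) has maximal class if its nilpotency class is $n-1$. $C_G(H)$ denotes the centralizer of $H$ in $G$. *)

(* Defs.v *)
From mathcomp Require Import all_boot all_fingroup all_solvable.
Set Implicit Arguments. Unset Strict Implicit. Unset Printing Implicit Defensive.
Local Open Scope group_scope.

Definition maximal_class (gT : finGroupType) (p : nat) (G : {set gT}) : Prop :=
  exists n : nat, (2 <= n)%N /\ #|G| = (p ^ n)%N /\ nil_class G = n.-1.

(* Main.v *)
Require Import Defs.
From mathcomp Require Import all_boot all_fingroup all_solvable.
From mathcomp Require Import zify.
Local Open Scope group_scope.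

Lemma center_order (gT : finGroupType) (p : nat) (G : {group gT}) :
  prime p -> p.-group G -> maximal_class p G -> ~~ abelian G -> #|'Z(G)| = p.
Proof.
move=> pr_p pG [n [n2 [oG cG]]] nabG.
have nilG := pgroup_nil pG.
have pZ : p.-group 'Z(G) := pgroupS (center_sub G) pG.
have [k oZ] := p_natP pZ.
have Zn1 : 'Z(G) != 1.
  rewrite center_nil_eq1 //; apply: contra nabG => /eqP ->; exact: abelian1.
have k1 : (0 < k)%N.
  case: k oZ => // oZ; case/negP: Zn1; by rewrite trivg_card1 oZ.
have kn : (k <= n)%N.
  by rewrite -(leq_exp2l _ _ (prime_gt1 pr_p)) -oZ -oG subset_leq_card ?center_sub.
have oQ : #|G / 'Z(G)| = (p ^ (n - k))%N.
  rewrite card_quotient ?normal_norm ?center_normal //.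
  apply/eqP; rewrite -(eqn_pmul2l (cardG_gt0 'Z(G))) Lagrange ?center_sub //.
  by rewrite oG oZ -expnD subnKC.
have hc := nil_class_pgroup (quotient_pgroup 'Z(G) pG).
rewrite nil_class_quotient_center // cG oQ pfactorK // in hc.
have n3 : (3 <= n)%N.
  rewrite ltnNge; apply: contra nabG => n2'.
  by rewrite -nil_class1 cG; lia.
case: (leqP (n - k).-1 1) => h.
  rewrite (maxn_idPl h) in hc.
  have n3e : n = 3 by lia.
  case: (leqP k 1) => hk; first by rewrite oZ; have -> : k = 1%N by lia.
  case/negP: nabG; apply: cyclic_center_factor_abelian.
  have : (n - k <= 1)%N by lia.
  rewrite leq_eqVlt ltnS leqn0 => /orP[] /eqP e; rewrite e in oQ.
    by apply: prime_cyclic; rewrite oQ expn1.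
  have -> : G / 'Z(G) = 1 by apply: card1_trivg; rewrite oQ.
  exact: cyclic1.
rewrite (maxn_idPr (ltnW h)) in hc.
by rewrite oZ; have -> : k = 1%N by lia.
Qed.

Arguments center_order {gT p G}.

Lemma max_gen (gT : finGroupType) (p : nat) (G M : {group gT}) g :
  p.-group G -> maximal M G -> g \in G -> g \notin M -> M * <[g]> = G.
Proof.
move=> pG maxM gG gM.
have nMG := p_maximal_normal pG maxM.
have sMG : M \subset G := normal_sub nMG.
have ngM : <[g]> \subset 'N(M) by rewrite cycle_subG (subsetP (normal_norm nMG)).
rewrite -norm_joinEr //.
have sJG : M <*> <[g]> \subset G by rewrite join_subG sMG cycle_subG.
case: (eqVneq (M <*> <[g]>) (G : {set gT})) => [-> //|neq].
have prJ : M <*> <[g]> \proper G by rewrite properEneq neq sJG.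
case/maxgroupP: maxM => _ /(_ _ prJ (joing_subl _ _)) eJ.
by case/negP: gM; rewrite -eJ /= mem_gen // inE cycle_id orbT.
Qed.

Arguments max_gen {gT p G M g}.

Theorem lemma6p11 (gT : finGroupType) (p : nat) (G : {group gT}) :
  prime p -> p.-group G -> maximal_class p G ->
  (exists M : {group gT}, maximal M G /\ abelian M) ->
  forall H : {group gT}, H \subset G -> ~~ abelian H -> 'C_G(H) \subset H.
Proof.
move=> pr_p pG mcG [M [maxM abM]] H sHG nabH.
have nabG : ~~ abelian G by apply: contra nabH; apply: abelianS.
have oZ := center_order pr_p pG mcG nabG.
have sMG : M \subset G := normal_sub (p_maximal_normal pG maxM).
have [h Hh hM] : exists2 h, h \in H & h \notin M.
  apply/subsetPn; apply: contra nabH => sHM; exact: abelianS sHM abM.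
have hG : h \in G := subsetP sHG h Hh.
have defG := max_gen pG maxM hG hM.
have claimA : forall m, m \in M -> commute m h -> m \in 'Z(G).
  move=> m mM cmh; rewrite inE (subsetP sMG) //= -defG centM inE.
  rewrite cent_cycle; apply/andP; split; last by apply/cent1P.
  exact: (subsetP abM).
have claimB : 'Z(H) \subset M.
  apply/subsetP => z zZ; apply: contraR nabH => zM.
  have zH : z \in H := subsetP (center_sub H) z zZ.
  have defGz := max_gen pG maxM (subsetP sHG z zH) zM.
  have defH : (H :&: M) * <[z]> = H.
    by rewrite group_modr ?cycle_subG // defGz; apply/setIidPl.
  rewrite -defH (abelianM (H :&: M)%G) (abelianS (subsetIr _ _) abM) cycle_abelian /=.
  rewrite cycle_subG; apply: (subsetP (centS (subsetIl H M))).
  by move: zZ; rewrite inE => /andP[].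
have sZHZG : 'Z(H) \subset 'Z(G).
  apply/subsetP => x xZ; apply: claimA; first exact: (subsetP claimB).
  by move: xZ; rewrite inE => /andP[_ /centP]; apply.
have pH : p.-group H := pgroupS sHG pG.
have ZHn1 : 'Z(H) != 1.
  rewrite center_nil_eq1 ?(pgroup_nil pH) //; apply: contra nabH => /eqP ->.
  exact: abelian1.
have eZ : 'Z(H) = 'Z(G).
  apply/eqP; rewrite eqEcard sZHZG oZ.
  have : (#|'Z(H)| %| p)%N by rewrite -oZ cardSg.
  case/primeP: pr_p => _ hp /hp /orP[] => e.
    by move: ZHn1; rewrite trivg_card1 e.
  by rewrite (eqP e) leqnn.
have sZGH : 'Z(G) \subset H by rewrite -eZ center_sub.
apply/subsetP => x /setIP [xG xCH].
rewrite -defG in xG; case/mulsgP: xG => m y mM yh ex.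
have yH : y \in H by apply: (subsetP _ y yh); rewrite cycle_subG.
rewrite ex groupM //; apply: (subsetP sZGH); apply: claimA => //.
have -> : m = x * y^-1 by rewrite ex mulgK.
apply: commute_sym; apply: commuteM; first exact: commute_sym (centP xCH h Hh).
case/cycleP: yh => i ->; rewrite -expgVn; apply: commuteX.
by apply: commuteV.
Qed.
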